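(* Let $I\subset S$ be a saturated Borel ideal, $\preceq$ any term order on the terms of $S$, and $p>q$ integers. If $I\cap\mathbb T_p$ is a segment with respect to $\preceq$, then $I\cap\mathbb T_q$ is a segment with respect to $\preceq$.
   Context: $S=K[x_0,\dots,x_n]$, $K$ algebraically closed of characteristic $0$, standard grading, $x_0<x_1<\dots<x_n$; $\mathbb T_t$ denotes the set of monomials (terms) of degree $t$. A monomial ideal is Borel if for every $t$, whenever $x^\alpha\in I\cap \mathbb T_t$ with $\alpha_j>0$ and $j<n$, also $x^\alpha x_{j+1}/x_j\in I$ (equivalently, $I\cap\mathbb T_t$ is closed under all such moves). Given a term order $\preceq$, a set $B\subseteq\mathbb T_t$ is a segment if whenever $\tau\in B$ and $\tau'\in\mathbb T_t$ with $\tau'\succ\tau$, then $\tau'\in B$. An ideal $I$ is saturated if $I=\bigcup_{h\ge0}(I:\mathfrak m^h)$ with $\mathfrak m=(x_0,\dots,x_n)$. *)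

(* Defs.v *)
(* Monomials of S = K[x_0,...,x_n] are exponent vectors. *)
From mathcomp Require Import all_boot.
Set Implicit Arguments. Unset Strict Implicit. Unset Printing Implicit Defensive.

Definition mon (n : nat) := {ffun 'I_n.+1 -> nat}.

Definition mdeg n (a : mon n) : nat := \sum_(i < n.+1) a i.
Definition mmul n (a b : mon n) : mon n := [ffun i => a i + b i].
Definition mone n : mon n := [ffun => 0%N].

(* the move x^alpha |-> x^alpha * x_{j+1} / x_j, for j < n
   (here j : 'I_n; widen_ord j has value j, lift ord0 j has value j+1) *)
Definition bmove n (a : mon n) (j : 'I_n) : mon n :=
  [ffun i => if i == widen_ord (leqnSn n) j then (a i).-1
             else if i == lift ord0 j then (a i).+1 else a i].

(* A monomial ideal of S, given by the set of terms it contains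
   (a monomial ideal is determined by its terms). *)
Definition monomial_ideal n (I : mon n -> Prop) : Prop :=
  forall a b, I a -> I (mmul a b).

Definition borel n (I : mon n -> Prop) : Prop :=
  forall (a : mon n) (j : 'I_n), I a -> 0 < a (widen_ord (leqnSn n) j) ->
    I (bmove a j).

(* I = union_h (I : m^h); for a monomial ideal, a term tau lies in (I : m^h)
   iff tau * sigma lies in I for every term sigma of degree h. *)
Definition saturated n (I : mon n -> Prop) : Prop :=
  forall (a : mon n) (h : nat),
    (forall s : mon n, mdeg s = h -> I (mmul a s)) -> I a.

Definition term_order n (le : mon n -> mon n -> Prop) : Prop :=
  (forall a, le a a) /\
  (forall a b, le a b -> le b a -> a = b) /\
  (forall a b c, le a b -> le b c -> le a c) /\
  (forall a b, le a b \/ le b a) /\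
  (forall a b c, le a b -> le (mmul a c) (mmul b c)) /\
  (forall a, le (mone n) a).

Definition strictly_below n (le : mon n -> mon n -> Prop) (a b : mon n) :=
  le a b /\ a <> b.

Definition ideal_deg n (I : mon n -> Prop) (t : nat) : mon n -> Prop :=
  fun a => I a /\ mdeg a = t.

Definition segment n (le : mon n -> mon n -> Prop) (t : nat)
    (B : mon n -> Prop) : Prop :=
  forall tau tau' : mon n, B tau -> mdeg tau' = t ->
    strictly_below le tau tau' -> B tau'.

(* Main.v *)
Require Import Defs.
From mathcomp Require Import all_boot.
Set Implicit Arguments. Unset Strict Implicit. Unset Printing Implicit Defensive.

Definition eu n (i : 'I_n.+1) : mon n := [ffun l => nat_of_bool (l == i)].
Definition x0p n (k : nat) : mon n := [ffun l => if l == ord0 then k else 0].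

Lemma mdeg_mul n (a b : mon n) : mdeg (mmul a b) = mdeg a + mdeg b.
Proof. rewrite /mdeg -big_split /=; apply: eq_bigr => i _; by rewrite ffunE. Qed.

Lemma mdeg_x0p n k : mdeg (x0p n k) = k.
Proof.
rewrite /mdeg big_ord_recl /= ffunE eqxx big1 ?addn0 // => i _.
by rewrite ffunE.
Qed.

Lemma chain n (I : mon n -> Prop) (a : mon n) :
  borel I -> I (mmul a (eu ord0)) ->
  forall k, k <= n -> I (mmul a (eu (inord k))).
Proof.
move=> hb h0; elim=> [|k IH] hk.
  by have -> : (inord 0 : 'I_n.+1) = ord0 by apply/val_inj; rewrite /= inordK.
have hkn : k < n by [].
have := hb _ (Ordinal hkn) (IH (ltnW hk)).
have hw : widen_ord (leqnSn n) (Ordinal hkn) = inord k.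
  by apply/val_inj; rewrite /= inordK // ltnW.
have hl : lift ord0 (Ordinal hkn) = inord k.+1.
  by apply/val_inj; rewrite /= inordK.
rewrite /bmove hw hl !ffunE eqxx addn1 => /(_ isT).
congr I; apply/ffunP => i; rewrite !ffunE.
case: (eqVneq i (inord k)) => [->|hik].
  have -> : (inord k == inord k.+1 :> 'I_n.+1) = false.
    apply/negbTE/negP => /eqP/(congr1 val); rewrite /= !inordK //; last by rewrite ltnW.
    by move=> /eqP; rewrite eqn_leq ltnn andbF.
  by rewrite addn1 addn0.
case: (eqVneq i (inord k.+1)) => [->|hik1]; first by rewrite addn0 addn1.
by [].
Qed.

Lemma sat_drop n (I : mon n -> Prop) (a : mon n) :
  borel I -> saturated I -> I (mmul a (eu ord0)) -> I a.
Proof.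
move=> hb hs h0; apply: (hs a 1) => s hs1.
have : exists i, 0 < s i.
  case: (pickP (fun i => 0 < s i)) => [i hi|hn]; first by exists i.
  move: hs1; rewrite /mdeg big1 // => i _; move: (hn i) => /=.
  by case: (s i).
case=> i hi.
have hrest : forall j, j != i -> s j = 0.
  move=> j hj; move: hs1; rewrite /mdeg (bigD1 i) //= => e.
  have : \sum_(l < n.+1 | l != i) s l = 0.
    apply/eqP; rewrite -leqn0 -(leq_add2l (s i)) e addn0 //.
  move/eqP; rewrite sum_nat_eq0 => /forallP /(_ j); rewrite hj /=.
  by move/eqP.
have hsi : s i = 1.
  move: hs1; rewrite /mdeg (bigD1 i) //= big1 ?addn0 //.
have := chain hb h0 (leq_ord i); rewrite inord_val.
congr I; apply/ffunP => j; rewrite !ffunE.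
case: (eqVneq j i) => [->|hj]; first by rewrite hsi.
by rewrite hrest.
Qed.

Lemma sat_dropk n (I : mon n -> Prop) :
  borel I -> saturated I -> forall k (a : mon n), I (mmul a (x0p n k)) -> I a.
Proof.
move=> hb hs; elim=> [|k IH] a h.
  congr I: h; apply/ffunP => j; rewrite !ffunE; by case: (j == ord0); rewrite addn0.
apply: IH; apply: (sat_drop hb hs).
congr I: h; apply/ffunP => j; rewrite !ffunE.
by case: (j == ord0); rewrite ?addn0 ?addnS ?addn1 ?addn0.
Qed.

Lemma mmul_inj n (a b c : mon n) : mmul a c = mmul b c -> a = b.
Proof.
move=> e; apply/ffunP => i; move/ffunP: e => /(_ i); rewrite !ffunE.
by move/addIn.
Qed.

Theorem mainTheorem2 (n : nat) (I : mon n -> Prop)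
    (le : mon n -> mon n -> Prop) (p q : nat) :
  monomial_ideal I -> borel I -> saturated I -> term_order le ->
  q < p ->
  segment le p (ideal_deg I p) ->
  segment le q (ideal_deg I q).
Proof.
move=> hm hb hs [_ [_ [_ [_ [hmul _]]]]] hqp hseg tau tau' [hI hd] hd' [hle hne].
split=> //.
have := hseg (mmul tau (x0p n (p - q))) (mmul tau' (x0p n (p - q))).
case.
- split; first exact: hm.
  by rewrite mdeg_mul mdeg_x0p hd subnKC // ltnW.
- by rewrite mdeg_mul mdeg_x0p hd' subnKC // ltnW.
- split; first exact: hmul.
  by move/mmul_inj.
- by move=> h _; exact: (sat_dropk hb hs h).
Qed.
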